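(* Let $Q$ be a finite connected quandle, $A$ an abelian group, $\theta:Q\times Q\to A$ a quandle cocycle, and $E=Q\times_\theta A$. If $\theta$ is not cohomologous to the trivial cocycle (i.e. the cover $E$ of $Q$ is not trivial), then $Q$ has a connected cover of size $p\,|Q|$ for some prime $p$.
   Context: A quandle is a set $Q$ with a binary operation $*$ such that every left translation $L_x:y\mapsto x*y$ is bijective, $x*(y*z)=(x*y)*(x*z)$ and $x*x=x$; $Q$ is connected if $\langle L_x:x\in Q\rangle$ is transitive. A quandle cocycle with values in $A$ is $\theta:Q\times Q\to A$ with $\theta_{x*y,x*z}+\theta_{x,z}=\theta_{x,y*z}+\theta_{y,z}$ and $\theta_{x,x}=0$; $E=Q\times_\theta A$ is $Q\times A$ with $(x,a)*(y,b)=(x*y,\theta_{x,y}+b)$. $\theta$ is cohomologous to the trivial cocycle if there is $\gamma:Q\to\mathrm{Sym}_A$ with $(b\mapsto\theta_{x,y}+b)=\gamma_{x*y}\gamma_y^{-1}$ for all $x,y$ (equivalently, since $Q$ is connected, $\theta_{x,y}=\gamma_{x*y}-\gamma_y$ for some $\gamma:Q\to A$). A cover of $Q$ is a quandle $E'$ with a surjective homomorphism $\pi:E'\to Q$ such that $\pi(u)=\pi(v)$ implies $L_u=L_v$ in $E'$; it is connected if $E'$ is connected, and its size is $|E'|$. *)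

(* Defs.v *)
From mathcomp Require Import all_boot all_algebra.
Set Implicit Arguments. Unset Strict Implicit. Unset Printing Implicit Defensive.
Import GRing.Theory.
Local Open Scope ring_scope.

Definition is_quandle (T : Type) (op : T -> T -> T) : Prop :=
  [/\ (forall x, bijective (op x)),
      (forall x y z, op x (op y z) = op (op x y) (op x z)) &
      (forall x, op x x = x)].

(* [in_orbit op x y] : y lies in the orbit of x under the group generated
   by the left translations L_z = op z (closure under each L_z and each L_z^{-1}). *)
Inductive in_orbit (T : Type) (op : T -> T -> T) (x : T) : T -> Prop :=
  | orb_refl : in_orbit op x x
  | orb_L : forall z y, in_orbit op x y -> in_orbit op x (op z y)
  | orb_Linv : forall z w, in_orbit op x (op z w) -> in_orbit op x w.

Definition connected_q (T : Type) (op : T -> T -> T) : Prop :=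
  forall x y : T, in_orbit op x y.

Definition quandle_cocycle (Q : Type) (op : Q -> Q -> Q) (A : zmodType)
    (theta : Q -> Q -> A) : Prop :=
  (forall x y z, theta (op x y) (op x z) + theta x z = theta x (op y z) + theta y z)
  /\ (forall x, theta x x = 0).

(* theta cohomologous to the trivial cocycle: there is gamma : Q -> Sym_A with
   (b |-> theta x y + b) = gamma_{x*y} o gamma_y^{-1}, i.e.
   gamma_{x*y} b = theta x y + gamma_y b for all b. *)
Definition cohomologous_trivial (Q : Type) (op : Q -> Q -> Q) (A : zmodType)
    (theta : Q -> Q -> A) : Prop :=
  exists gamma : Q -> A -> A,
    (forall x, bijective (gamma x)) /\
    (forall x y b, gamma (op x y) b = theta x y + gamma y b).

Definition is_cover (E Q : Type) (opE : E -> E -> E) (op : Q -> Q -> Q)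
    (pi : E -> Q) : Prop :=
  [/\ is_quandle opE,
      (forall q, exists u, pi u = q),
      (forall u v, pi (opE u v) = op (pi u) (pi v)) &
      (forall u v, pi u = pi v -> forall w, opE u w = opE v w)].

(* Main.v *)
From mathcomp Require Import all_boot all_order all_algebra.
From Stdlib Require Import Classical ClassicalEpsilon.
Require Import Defs.
Set Implicit Arguments. Unset Strict Implicit. Unset Printing Implicit Defensive.
Import Order.TTheory GRing.Theory Num.Theory.
Section Orbit.
Variables (T : Type) (op : T -> T -> T).

Lemma orb_trans x y w : in_orbit op x y -> in_orbit op y w -> in_orbit op x w.
Proof.
move=> Hxy Hyw; elim: Hyw => //; first by move=> z y' _ IH; exact: orb_L.
by move=> z w' _ IH; exact: orb_Linv IH.
Qed.

Lemma orb_sym x y : in_orbit op x y -> in_orbit op y x.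
Proof.
elim=> [|z y' _ IH|z w _ IH]; first exact: orb_refl.
- apply: orb_trans IH; apply: (@orb_Linv _ _ _ z); exact: orb_refl.
- apply: orb_trans IH; apply: orb_L; exact: orb_refl.
Qed.

Lemma orb_hom (T2 : Type) (op2 : T2 -> T2 -> T2) (F : T -> T2) :
  (forall u v, F (op u v) = op2 (F u) (F v)) ->
  forall x y, in_orbit op x y -> in_orbit op2 (F x) (F y).
Proof.
move=> HF x y; elim=> [|z y' _ IH|z w _ IH]; first exact: orb_refl.
- rewrite HF; exact: orb_L.
- by apply: (@orb_Linv _ _ _ (F z)); rewrite -HF.
Qed.
End Orbit.

Section RS.
Local Open Scope ring_scope.

Definition ext (Q : Type) (op : Q -> Q -> Q) (B : zmodType) (c : Q -> Q -> B)
  (u v : Q * B) : Q * B := (op u.1 v.1, c u.1 v.1 + v.2).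

Section Ext.
Variables (Q : Type) (op : Q -> Q -> Q) (B : zmodType) (c : Q -> Q -> B).
Hypothesis Hq : is_quandle op.
Hypothesis Hc : quandle_cocycle op c.

Lemma ext_quandle : is_quandle (ext op c).
Proof.
case: Hq => Hb Hd Hi; case: Hc => Hcc Hc0; split.
- move=> [x a]; have [g g1 g2] := Hb x.
  exists (fun v : Q * B => (g v.1, v.2 - c x (g v.1))).
  + by move=> [y b]; rewrite /ext /= g1 addrC addKr.
  + by move=> [y b]; rewrite /ext /= g2 addrC subrK.
- move=> [x a] [y b] [z d]; rewrite /ext /=; congr (_, _); first exact: Hd.
  by rewrite !addrA Hcc.
- by move=> [x a]; rewrite /ext /= Hi Hc0 add0r.
Qed.

Lemma ext_cover : is_cover (ext op c) op fst.
Proof.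
split.
- exact: ext_quandle.
- by move=> q; exists (q, 0).
- by [].
- by move=> [x a] [y b] /= -> w.
Qed.

Lemma ext_shift (d : B) x y : in_orbit (ext op c) x y ->
  in_orbit (ext op c) (x.1, x.2 + d) (y.1, y.2 + d).
Proof.
apply: (orb_hom (F := fun u : Q * B => (u.1, u.2 + d))).
by move=> [u1 u2] [v1 v2]; rewrite /ext /= addrA.
Qed.
End Ext.
End RS.
Lemma my_emi (P : Prop) : {P} + {~ P}.
Proof.
have H : exists b : bool, if b then P else ~ P.
  by case: (classic P) => H; [exists true | exists false].
by case: (constructive_indefinite_description _ H) => [[] Hb]; [left|right].
Qed.

Definition asb (P : Prop) : bool := if my_emi P then true else false.
Lemma asbP (P : Prop) : reflect P (asb P).
Proof. by rewrite /asb; case: my_emi => H; constructor. Qed.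

Section Core.
Local Open Scope ring_scope.
Variables (A : zmodType) (T : finType) (v : T -> A).

Definition span (J : {set T}) (a : A) : Prop :=
  exists n : T -> int, a = \sum_(t in J) v t *~ n t.

Lemma span0 (J : {set T}) : span J 0.
Proof. by exists (fun _ => 0); rewrite big1 // => t _; rewrite mulr0z. Qed.

Lemma spanD (J : {set T}) a b : span J a -> span J b -> span J (a + b).
Proof.
move=> [na ->] [nb ->]; exists (fun t => na t + nb t).
by rewrite -big_split; apply: eq_bigr => t _; rewrite mulrzDr.
Qed.

Lemma spanZ (J : {set T}) a k : span J a -> span J (a *~ k).
Proof.
move=> [na ->]; exists (fun t => na t * k).
by rewrite mulrz_suml; apply: eq_bigr => t _; rewrite mulrzA.
Qed.

Lemma spanN (J : {set T}) a : span J a -> span J (- a).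
Proof. by move=> /(spanZ (-1)); rewrite mulrNz mulr1z. Qed.

Lemma spanB (J : {set T}) a b : span J a -> span J b -> span J (a - b).
Proof. by move=> Ha /spanN; apply: spanD. Qed.

Lemma span_v (J : {set T}) t : t \in J -> span J (v t).
Proof.
move=> tJ; exists (fun s => (s == t)%:Z).
rewrite (bigD1 t) //= eqxx mulr1z big1 ?addr0 // => s /andP [_ /negbTE ->].
by rewrite mulr0z.
Qed.

Lemma span_trans (J K : {set T}) a : (forall j, j \in J -> span K (v j)) -> span J a -> span K a.
Proof.
move=> HJ [n ->]; apply: (big_ind (span K)); first exact: span0.
- exact: spanD.
- by move=> t tJ; apply: spanZ; apply: HJ.
Qed.

Lemma core : (exists t, v t != 0) -> exists p, prime p /\
  exists phi : A -> 'F_p,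
    (forall a b, span setT a -> span setT b -> phi (a + b) = phi a + phi b) /\
    exists t, phi (v t) != 0.
Proof.
move=> [t0 vt0].
have exP : exists k, asb (exists J : {set T}, #|J| = k /\ forall t, span J (v t)).
  by exists #|T|; apply/asbP; exists setT; split; [rewrite cardsT | move=> t; apply: span_v; rewrite inE].
case: (ex_minnP exP) => d /asbP [J [cJ HJ]] dmin.
have [j0 j0J] : exists j0, j0 \in J.
  case: (pickP (mem J)) => [j jJ|J0]; first by exists j.
  have := HJ t0; case=> n Hn; move: vt0; rewrite Hn big_pred0 ?eqxx //.
have notK : ~ span (J :\ j0) (v j0).
  move=> Hs; have : (d <= #|J :\ j0|)%N.
    apply: dmin; apply/asbP; exists (J :\ j0); split => // t.
    apply: span_trans (HJ t) => j jJ; case: (eqVneq j j0) => [->//|ne].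
    by apply: span_v; rewrite !inE ne.
  by rewrite -cJ (cardsD1 j0 J) j0J ltnn.
pose K := J :\ j0.
have [p [pp pdv]] : exists p, prime p /\ forall n, span K (v j0 *~ n) -> (p%:Z %| n)%Z.
  have NN : forall n, span K (v j0 *~ n) -> span K (v j0 *~ - n).
    by move=> n /spanN; rewrite mulrNz.
  case: (classic (exists n, n != 0 /\ span K (v j0 *~ n))) => [[n [nz Hn]]|none]; last first.
    exists 2%N; split => // n Hn; case: (eqVneq n 0) => [->//|nz].
    by case: none; exists n.
  have exk : exists k, asb ((0 < k)%N /\ span K (v j0 *~ k%:Z)).
    exists `|n|%N; apply/asbP; split; first by rewrite absz_gt0.
    case: (lerP 0 n) => [n0|n0]; first by rewrite gez0_abs.
    by rewrite ltz0_abs //; apply: NN.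
  case: (ex_minnP exk) => e /asbP [e0 He] emin.
  have e1 : (1 < e)%N.
    case: e e0 He {emin} => [//|[|//]] _; rewrite mulr1z => H; by case: notK.
  exists (pdiv e); split; first exact: pdiv_prime.
  move=> m Hm; apply: (@dvdz_trans e%:Z); first by rewrite dvdzE; exact: pdiv_dvd.
  apply/dvdz_mod0P.
  have r0 : 0 <= (m %% e%:Z)%Z by apply: modz_ge0; rewrite eqz_nat -lt0n.
  have re : (m %% e%:Z)%Z < e%:Z by apply: ltz_pmod; rewrite ltz_nat.
  have Er : (m %% e%:Z)%Z = m - (m %/ e%:Z)%Z * e%:Z.
    by rewrite {2}(divz_eq m e%:Z) addrC addKr.
  have Hr : span K (v j0 *~ (m %% e%:Z)%Z).
    rewrite Er mulrzBr; apply: spanB => //; rewrite mulrC mulrzA; exact: spanZ.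
  case: (boolP ((m %% e%:Z)%Z == 0)) => [/eqP //|rnz].
  have : (e <= `|(m %% e%:Z)%Z|)%N.
    apply: emin; apply/asbP; split; first by rewrite absz_gt0.
    by rewrite gez0_abs.
  rewrite -lez_nat gez0_abs // leNgt re. done.
pose rep (a : A) : T -> int :=
  match my_emi (span J a) with
  | left H => proj1_sig (constructive_indefinite_description _ H)
  | right _ => fun _ => 0 end.
have repP : forall a, span J a -> a = \sum_(t in J) v t *~ rep a t.
  move=> a Ha; rewrite /rep; case: my_emi => // H.
  exact: proj2_sig (constructive_indefinite_description _ H).
pose phi (a : A) : 'F_p := (rep a j0)%:~R.
have key : forall a n, a = \sum_(t in J) v t *~ n t -> phi a = (n j0)%:~R.
  move=> a n Ha; have Hs : span J a by exists n.
  have E := repP a Hs.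
  apply/eqP; rewrite -subr_eq0 -intrB -(dvdz_pcharf (pchar_Fp pp)).
  apply: pdv.
  have : \sum_(t in J) v t *~ (rep a t - n t) = 0.
    by rewrite (eq_bigr (fun t => v t *~ rep a t - v t *~ n t)) ?sumrB -?E -?Ha ?subrr // => t _; rewrite mulrzBr.
  rewrite (bigD1 j0) //= => /eqP; rewrite addr_eq0 => /eqP ->.
  apply: spanN; exists (fun t => rep a t - n t).
  by apply: eq_bigl => t; rewrite !inE andbC.
exists p; split => //; exists phi; split.
- move=> a b Ha Hb.
  have HJ' : forall j, j \in [set: T] -> span J (v j) by move=> j _; apply: HJ.
  have [na Ea] : span J a by apply: span_trans Ha.
  have [nb Eb] : span J b by apply: span_trans Hb.
  rewrite (key a na Ea) (key b nb Eb) (key (a + b) (fun t => na t + nb t)) ?intrD //.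
  by rewrite Ea Eb -big_split; apply: eq_bigr => t _; rewrite mulrzDr.
- exists j0; rewrite (key (v j0) (fun t => (t == j0)%:Z)) ?eqxx ?oner_eq0 //.
  rewrite (bigD1 j0) //= eqxx mulr1z big1 ?addr0 // => s /andP [_ /negbTE ->].
  by rewrite mulr0z.
Qed.
End Core.

Section Aux.
Local Open Scope ring_scope.
Lemma aux1 (M : zmodType) (a b c d : M) : a + b - c = a + d - c + (b - d).
Proof. by rewrite [RHS]addrAC addrACA subrr addr0. Qed.
Lemma aux2 (M : zmodType) (a b c d e f g k : M) : a + d = f + k ->
  a + b - c + (d + e - b) = f + g - c + (k + e - g).
Proof.
move=> H.
have E : forall x y z w : M, x + y - z + (w + e - y) = (x + w) + e - z.
  by move=> x y z w; rewrite addrAC addrACA subrr addr0 addrA.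
by rewrite !E H.
Qed.
End Aux.

Section Main.
Local Open Scope ring_scope.
Lemma main_lemma (Q : finType) (op : Q -> Q -> Q) (A : zmodType)
    (theta : Q -> Q -> A) :
  is_quandle op -> connected_q op -> quandle_cocycle op theta ->
  ~ cohomologous_trivial op theta ->
  exists p : nat, prime p /\
    exists (E : finType) (opE : E -> E -> E) (pi : E -> Q),
      is_cover opE op pi /\ connected_q opE /\ #|E| = (p * #|Q|)%N.
Proof.
move=> Hq Hconn Hcoc Hnt.
case: (pickP (fun _ : Q => true)) => [q0 _|Q0]; last first.
  exfalso; apply: Hnt; exists (fun _ => id); split.
  - by move=> x; exists id.
  - by move=> x; have := Q0 x.
pose opT := ext op theta.
have lift : forall y, exists b, in_orbit opT (q0, 0) (y, b).
  move=> y; elim: (Hconn q0 y) => [|z y' _ [b Hb]|z w _ [b Hb]].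
  - by exists 0; exact: orb_refl.
  - by exists (theta z y' + b); exact: (@orb_L _ _ _ (z, 0) _ Hb).
  - exists (b - theta z w); apply: (@orb_Linv _ _ _ (z, 0)).
    by rewrite /opT /ext /= addrC subrK.
have [h Hh] : exists h : Q -> A, forall y, in_orbit opT (q0, 0) (y, h y).
  exists (fun y => proj1_sig (constructive_indefinite_description _ (lift y))) => y.
  exact: proj2_sig (constructive_indefinite_description _ (lift y)).
pose sigma x y := theta x y + h y - h (op x y).
have Hsc : quandle_cocycle op sigma.
  case: Hcoc => Hc1 Hc0; case: Hq => _ Hd Hi; split.
  - by move=> x y z; rewrite /sigma -Hd; apply: aux2; exact: Hc1.
  - by move=> x; rewrite /sigma Hc0 Hi add0r subrr.
pose opS := ext op sigma.
have HS0 : forall y, in_orbit opS (q0, 0) (y, 0).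
  have H1 : forall y, in_orbit opS (q0, - h q0) (y, 0).
    move=> y; have := orb_hom (F := fun u : Q * A => (u.1, u.2 - h u.1)) _ (Hh y).
    rewrite /= sub0r subrr; apply.
    by move=> [u1 u2] [v1 v2]; rewrite /opT /opS /ext /= /sigma; congr (_, _); exact: aux1.
  move=> y; apply: orb_trans (H1 y); apply: orb_sym; exact: H1.
have nz : exists t : Q * Q, sigma t.1 t.2 != 0.
  case: (classic (exists t : Q * Q, sigma t.1 t.2 != 0)) => // H; exfalso; apply: Hnt.
  exists (fun x b => h x + b); split.
  - move=> x; exists (fun b => b - h x) => b; first by rewrite addrC addKr.
    by rewrite addrC subrK.
  - move=> x y b; have : sigma x y == 0.
      by apply: contraT => Hn; case: H; exists (x, y).
    by rewrite /sigma subr_eq0 => /eqP <-; rewrite addrA.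
have [p [pp [phi [phiD [t0 pt0]]]]] := core nz.
pose v := fun t : Q * Q => sigma t.1 t.2.
have Sv : forall x y, span v setT (sigma x y).
  by move=> x y; apply: (@span_v _ _ v setT (x, y)); rewrite inE.
have phi0 : phi 0 = 0.
  have := phiD 0 0 (span0 _ _) (span0 _ _); rewrite addr0.
  by move=> /(congr1 (fun z => z - phi 0)); rewrite subrr addrK.
pose psi x y := phi (sigma x y).
have Hpc : quandle_cocycle op psi.
  split; last by move=> x; rewrite /psi Hsc.2.
  by move=> x y z; rewrite /psi -!phiD ?Sv //; congr phi; apply: Hsc.1.
pose opE := ext op psi.
have sim : forall w, in_orbit opS (q0, 0) w ->
    span v setT w.2 /\ in_orbit opE (q0, 0) (w.1, phi w.2).
  move=> w; elim=> [|z y _ [Sy Oy]|z w' _ [Sw Ow]].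
  - by split; [exact: span0 | rewrite phi0; exact: orb_refl].
  - split; first by apply: spanD.
    by rewrite /= phiD //; exact: (@orb_L _ _ _ (z.1, 0) _ Oy).
  - have Sw' : span v setT w'.2.
      have := spanB Sw (Sv z.1 w'.1); by rewrite /= [sigma _ _ + _]addrC addrK.
    split => //; apply: (@orb_Linv _ _ _ (z.1, 0)).
    by move: Ow; rewrite /= phiD.
have HE0 : forall y, in_orbit opE (q0, 0) (y, 0).
  by move=> y; have [_] := sim _ (HS0 y); rewrite /= phi0.
have Hpsi : forall x y, in_orbit opE (q0, 0) (q0, psi x y).
  move=> x y.
  have := sim (op x y, sigma x y + 0) (@orb_L _ _ _ (x, 0) _ (HS0 y)).
  move=> [_ /=]; rewrite addr0 => H1.
  have := ext_shift (psi x y) (HE0 (op x y)); rewrite /= !add0r => H2.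
  exact: orb_trans H1 (orb_sym H2).
have Sadd : forall c d, in_orbit opE (q0, 0) (q0, c) -> in_orbit opE (q0, 0) (q0, d) ->
    in_orbit opE (q0, 0) (q0, c + d).
  move=> c d Hc Hd; have := ext_shift c Hd; rewrite /= add0r addrC => H.
  exact: orb_trans Hc H.
have Smul : forall k, in_orbit opE (q0, 0) (q0, psi t0.1 t0.2 *+ k).
  elim=> [|k IH]; first by rewrite mulr0n; exact: orb_refl.
  by rewrite mulrS; apply: Sadd.
have Sall : forall c, in_orbit opE (q0, 0) (q0, c).
  move=> c; have -> : c = (c / psi t0.1 t0.2) * psi t0.1 t0.2 by rewrite divfK.
  by rewrite -[c / _]natr_Zp mulr_natl.
have Hall : forall u, in_orbit opE (q0, 0) u.
  move=> [y c]; have := ext_shift c (HE0 y); rewrite /= !add0r => H.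
  exact: orb_trans (Sall c) H.
exists p; split => //; exists (Q * 'F_p)%type, opE, fst; split.
  exact: ext_cover.
split; first by move=> u w; apply: orb_trans (orb_sym (Hall u)) (Hall w).
by rewrite card_prod card_Fp // mulnC.
Qed.
End Main.

Theorem proposition2p11 (Q : finType) (op : Q -> Q -> Q) (A : zmodType)
    (theta : Q -> Q -> A) :
  is_quandle op -> connected_q op -> quandle_cocycle op theta ->
  ~ cohomologous_trivial op theta ->
  exists p : nat, prime p /\
    exists (E : finType) (opE : E -> E -> E) (pi : E -> Q),
      is_cover opE op pi /\ connected_q opE /\ #|E| = (p * #|Q|)%N.
Proof. exact: main_lemma. Qed.
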